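(* In the structural equation model of the context, for every fixed $\gamma\in\mathbb{R}^q$ and every subset $S\subseteq\{1,\dots,q\}$, the population regression coefficient satisfies $\hat\beta(S)=\beta+\mathbf{C}(S)\gamma$.
   Context: Structural equation model: fix integers $d,q,r\ge1$. Let $N_z\in\mathbb{R}^r$, $N_w\in\mathbb{R}^q$, $N_x\in\mathbb{R}^d$, $N_y\in\mathbb{R}$ be mutually independent zero-mean random vectors with $\operatorname{Cov}(N_z)=I_r$, $\operatorname{Cov}(N_w)=\operatorname{diag}(\sigma_{w,1}^2,\dots,\sigma_{w,q}^2)$ with all $\sigma_{w,i}^2>0$, $\operatorname{Cov}(N_x)=\mathbf{D}_x$ a positive definite diagonal matrix, $\operatorname{Var}(N_y)=\sigma_y^2$. With $\mathbf{A}\in\mathbb{R}^{q\times r}$, $\mathbf{B}\in\mathbb{R}^{d\times r}$, $\beta\in\mathbb{R}^d$, $\gamma\in\mathbb{R}^q$: $Z=N_z$, $W=\mathbf{A}Z+N_w$, $X=\mathbf{B}Z+N_x$, $Y=\beta^\top X+\gamma^\top W+N_y$. For $S\subseteq\{1,\dots,q\}$, $S^c$ is its complement, $W_S$ the subvector, $\mathbf{A}_S$ the rows of $\mathbf{A}$ indexed by $S$, $\mathbf{D}_S=\operatorname{diag}(\sigma_{w,i}^2)_{i\in S}$. $\hat\beta(S)=(I_d,\mathbf{0})\operatorname{Var}((X,W_S))^{-1}\operatorname{Cov}((X,W_S),Y)$. $\mathbf{C}(S)\in\mathbb{R}^{d\times q}$ has zero columns for indices in $S$, and its columns indexed by $S^c$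 form $\mathbf{D}_x^{-1}\mathbf{B}(I_r+\mathbf{B}^\top\mathbf{D}_x^{-1}\mathbf{B}+\mathbf{A}_S^\top\mathbf{D}_S^{-1}\mathbf{A}_S)^{-1}\mathbf{A}_{S^c}^\top$. *)

(* Defs.v *)
From mathcomp Require Import all_boot all_order all_algebra.
Set Implicit Arguments. Unset Strict Implicit. Unset Printing Implicit Defensive.
Import Order.TTheory GRing.Theory Num.Theory.
Local Open Scope ring_scope.

(* A covariance form on a real vector space V of (square-integrable, zero-mean)
   random variables: symmetric, bilinear, positive semidefinite. *)
Definition covariance_form (R : realFieldType) (V : lmodType R) (cov : V -> V -> R) :=
  [/\ (forall (a : R) (u v w : V), cov (a *: u + v) w = a * cov u w + cov v w),
      (forall u v : V, cov u v = cov v u)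
    & (forall v : V, 0 <= cov v v)].

Section SEM.
Variables (R : realFieldType) (V : lmodType R) (cov : V -> V -> R).
Variables (r q d : nat).
Variables (nz : 'I_r -> V) (nw : 'I_q -> V) (nx : 'I_d -> V) (ny : V).
Variables (A : 'M[R]_(q, r)) (B : 'M[R]_(d, r)) (beta : 'cV[R]_d) (gamma : 'cV[R]_q).

Definition semZ (k : 'I_r) : V := nz k.
Definition semW (j : 'I_q) : V := \sum_(k < r) A j k *: semZ k + nw j.
Definition semX (i : 'I_d) : V := \sum_(k < r) B i k *: semZ k + nx i.
Definition semY : V :=
  \sum_(i < d) beta i 0 *: semX i + \sum_(j < q) gamma j 0 *: semW j + ny.

(* the vector (X, W_S), indexed by 'I_(d + #|S|); W_S lists W_j, j in S, in increasing order *)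
Definition semXWS (S : {set 'I_q}) (k : 'I_(d + #|S|)) : V :=
  match split k with
  | inl i => semX i
  | inr s => semW (enum_val s)
  end.

Definition VarXWS (S : {set 'I_q}) : 'M[R]_(d + #|S|) :=
  \matrix_(k, l) cov (semXWS k) (semXWS l).
Definition CovXWSY (S : {set 'I_q}) : 'cV[R]_(d + #|S|) :=
  \col_k cov (semXWS k) semY.

Definition betahat (S : {set 'I_q}) : 'cV[R]_d :=
  row_mx (1%:M : 'M[R]_d) (0 : 'M[R]_(d, #|S|)) *m invmx (VarXWS S) *m CovXWSY S.
End SEM.

Section CMat.
Variables (R : realFieldType) (r q d : nat).
Variables (A : 'M[R]_(q, r)) (B : 'M[R]_(d, r)) (dx : 'I_d -> R) (sw : 'I_q -> R).

Definition Dx : 'M[R]_d := diag_mx (\row_i dx i).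
Definition Asub (T : {set 'I_q}) : 'M[R]_(#|T|, r) := \matrix_(i, k) A (enum_val i) k.
Definition Dsub (T : {set 'I_q}) : 'M[R]_(#|T|) := diag_mx (\row_i sw (enum_val i)).
Definition Ccols (S : {set 'I_q}) : 'M[R]_(d, #|~: S|) :=
  invmx Dx *m B *m
  invmx (1%:M + B^T *m invmx Dx *m B + (Asub S)^T *m invmx (Dsub S) *m Asub S) *m
  (Asub (~: S))^T.
(* embedding of the S^c-indexed columns into 'I_q (zero columns at indices in S) *)
Definition embed_cols (T : {set 'I_q}) : 'M[R]_(#|T|, q) :=
  \matrix_(k, j) (enum_val k == j)%:R.
Definition Cmat (S : {set 'I_q}) : 'M[R]_(d, q) := Ccols S *m embed_cols (~: S).
End CMat.

(* Main.v *)
Require Import Defs.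
From mathcomp Require Import all_boot all_order all_algebra.
From mathcomp Require Import ring.
Import Order.TTheory GRing.Theory Num.Theory.
Local Open Scope ring_scope.
Set Implicit Arguments. Unset Strict Implicit.

Lemma covDl (R : realFieldType) (V : lmodType R) (cov : V -> V -> R) :
  covariance_form cov -> forall u v w, cov (u + v) w = cov u w + cov v w.
Proof. rewrite /covariance_form; case=> L _ _ u v w; by rewrite -[u]scale1r L mul1r scale1r. Qed.

Lemma cov0l (R : realFieldType) (V : lmodType R) (cov : V -> V -> R) :
  covariance_form cov -> forall w, cov 0 w = 0.
Proof.
move=> H w; have := covDl H 0 0 w; rewrite addr0 => /eqP.
by rewrite -subr_eq subrr eq_sym => /eqP.
Qed.

Lemma covZl (R : realFieldType) (V : lmodType R) (cov : V -> V -> R) :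
  covariance_form cov -> forall a u w, cov (a *: u) w = a * cov u w.
Proof.
move=> H a u w; have [L _ _] := H.
by rewrite -[a *: u]addr0 L (cov0l H) addr0.
Qed.

Lemma cov_suml (R : realFieldType) (V : lmodType R) (cov : V -> V -> R) :
  covariance_form cov -> forall n (F : 'I_n -> V) w,
  cov (\sum_(i < n) F i) w = \sum_(i < n) cov (F i) w.
Proof.
move=> H n F w; elim/big_rec2: _ => [|i y1 y2 _ <-]; first exact: cov0l.
exact: covDl.
Qed.

Lemma covC (R : realFieldType) (V : lmodType R) (cov : V -> V -> R) :
  covariance_form cov -> forall u v, cov u v = cov v u.
Proof. by rewrite /covariance_form; case. Qed.

Lemma cov_comb (R : realFieldType) (V : lmodType R) (cov : V -> V -> R) :
  covariance_form cov -> forall n (e : 'I_n -> V) (a b : 'I_n -> R) n1 n2,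
  (forall k l, cov (e k) (e l) = (k == l)%:R) ->
  (forall k, cov (e k) n1 = 0) -> (forall k, cov (e k) n2 = 0) ->
  cov (\sum_l a l *: e l + n1) (\sum_l b l *: e l + n2) =
  \sum_l a l * b l + cov n1 n2.
Proof.
move=> H n e a b n1 n2 Hee He1 He2.
have Hl : forall l, cov (e l) (\sum_k b k *: e k + n2) = b l.
  move=> l; rewrite (covC H) (covDl H) (covC H n2) He2 addr0 (cov_suml H).
  rewrite (bigD1 l) //= big1 ?addr0 => [|k kl].
    by rewrite (covZl H) Hee eqxx mulr1.
  by rewrite (covZl H) Hee (negbTE kl) mulr0.
have Hn : cov n1 (\sum_k b k *: e k + n2) = cov n1 n2.
  rewrite (covC H) (covDl H) (cov_suml H) big1 ?add0r ?(covC H n2) // => k _.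
  by rewrite (covZl H) He1 mulr0.
rewrite (covDl H) (cov_suml H) Hn; congr (_ + _); apply: eq_bigr => l _.
by rewrite (covZl H) Hl.
Qed.

Lemma covDr (R : realFieldType) (V : lmodType R) (cov : V -> V -> R) :
  covariance_form cov -> forall u v w, cov w (u + v) = cov w u + cov w v.
Proof. by move=> H u v w; rewrite !(covC H w) (covDl H). Qed.

Lemma covZr (R : realFieldType) (V : lmodType R) (cov : V -> V -> R) :
  covariance_form cov -> forall a u w, cov w (a *: u) = a * cov w u.
Proof. by move=> H a u w; rewrite !(covC H w) (covZl H). Qed.

Lemma cov_sumr (R : realFieldType) (V : lmodType R) (cov : V -> V -> R) :
  covariance_form cov -> forall n (F : 'I_n -> V) w,
  cov w (\sum_(i < n) F i) = \sum_(i < n) cov w (F i).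
Proof.
by move=> H n F w; rewrite (covC H) (cov_suml H); apply: eq_bigr => i _; rewrite (covC H).
Qed.
Lemma woodbury (R : fieldType) n m (G : 'M[R]_(n, m)) (D Dinv : 'M[R]_n) (K : 'M[R]_m) :
  D *m Dinv = 1%:M -> K = 1%:M + G^T *m Dinv *m G -> K \in unitmx ->
  (G *m G^T + D) \in unitmx /\
  invmx (G *m G^T + D) *m G = Dinv *m G *m invmx K.
Proof.
move=> HD HK Ku.
have E1 : (G *m G^T + D) *m (Dinv *m G *m invmx K) = G.
  rewrite mulmxDl.
  have -> : D *m (Dinv *m G *m invmx K) = G *m invmx K by rewrite !mulmxA HD mul1mx.
  have -> : G *m G^T *m (Dinv *m G *m invmx K) = G *m (G^T *m Dinv *m G) *m invmx K
    by rewrite !mulmxA.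
  have -> : G *m (G^T *m Dinv *m G) *m invmx K + G *m invmx K = G *m K *m invmx K.
    by rewrite -mulmxDl HK mulmxDr mulmx1 addrC.
  by rewrite -mulmxA mulmxV // mulmx1.
have E2 : (G *m G^T + D) *m (Dinv - Dinv *m G *m invmx K *m G^T *m Dinv) = 1%:M.
  rewrite mulmxBr.
  have -> : (G *m G^T + D) *m (Dinv *m G *m invmx K *m G^T *m Dinv) = G *m G^T *m Dinv.
    have -> : Dinv *m G *m invmx K *m G^T *m Dinv = (Dinv *m G *m invmx K) *m (G^T *m Dinv)
      by rewrite !mulmxA.
    by rewrite mulmxA E1 mulmxA.
  by rewrite mulmxDl HD addrAC subrr add0r.
have [Mu _] := mulmx1_unit E2.
split=> //.
by apply: (canLR (mulKmx Mu)); rewrite E1.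
Qed.
Lemma invmx_uniq (R : fieldType) n (X Y : 'M[R]_n) : X *m Y = 1%:M -> invmx X = Y.
Proof.
move=> E; have [Xu _] := mulmx1_unit E.
by rewrite -[invmx X]mulmx1 -E mulmxA mulVmx // mul1mx.
Qed.

Lemma diag_mulinv (R : fieldType) n (p : 'I_n -> R) : (forall i, p i != 0) ->
  diag_mx (\row_i p i) *m diag_mx (\row_i (p i)^-1) = 1%:M.
Proof.
move=> Hp; rewrite mul_diag_mx; apply/matrixP => i j.
rewrite !mxE; case: (eqVneq i j) => [->|ij]; last by rewrite !mulr0.
by rewrite !mulr1n mulfV.
Qed.

Lemma invmx_diag (R : fieldType) n (p : 'I_n -> R) : (forall i, p i != 0) ->
  invmx (diag_mx (\row_i p i)) = diag_mx (\row_i (p i)^-1).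
Proof. by move=> Hp; apply: invmx_uniq; apply: diag_mulinv. Qed.

Lemma quad_diag (R : fieldType) n (x : 'rV[R]_n) (c : 'I_n -> R) :
  (x *m diag_mx (\row_i c i) *m x^T) 0 0 = \sum_i c i * x 0 i ^+ 2.
Proof.
rewrite mul_mx_diag !mxE; apply: eq_bigr => i _; rewrite !mxE.
by rewrite expr2; ring.
Qed.

Lemma quad_id (R : fieldType) n (x : 'rV[R]_n) :
  (x *m x^T) 0 0 = \sum_i x 0 i ^+ 2.
Proof. by rewrite !mxE; apply: eq_bigr => i _; rewrite !mxE expr2. Qed.

Lemma K_unit (R : realFieldType) r n1 n2 (B : 'M[R]_(n1, r)) (C : 'M[R]_(n2, r))
  (c1 : 'I_n1 -> R) (c2 : 'I_n2 -> R) :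
  (forall i, 0 <= c1 i) -> (forall i, 0 <= c2 i) ->
  1%:M + B^T *m diag_mx (\row_i c1 i) *m B + C^T *m diag_mx (\row_i c2 i) *m C
    \in unitmx.
Proof.
move=> H1 H2; set K := _ + _ + _.
rewrite -row_free_unit -kermx_eq0; apply/eqP/row_matrixP => i; rewrite row0.
set u := row i _.
have uK : u *m K = 0 by rewrite /u -row_mul mulmx_ker row0.
have : (u *m K *m u^T) 0 0 = 0 by rewrite uK mul0mx mxE.
rewrite /K !mulmxDr !mulmxDl mulmx1.
have e1 : u *m (B^T *m diag_mx (\row_i c1 i) *m B) *m u^T =
    (u *m B^T) *m diag_mx (\row_i c1 i) *m (u *m B^T)^T
  by rewrite trmx_mul trmxK !mulmxA.
have e2 : u *m (C^T *m diag_mx (\row_i c2 i) *m C) *m u^T =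
    (u *m C^T) *m diag_mx (\row_i c2 i) *m (u *m C^T)^T
  by rewrite trmx_mul trmxK !mulmxA.
rewrite e1 e2 [X in X = 0 -> _]mxE [X in X + _ = 0 -> _]mxE !quad_diag quad_id.
have P0 : 0 <= \sum_i u 0 i ^+ 2 by apply: sumr_ge0 => j _; exact: sqr_ge0.
have P1 : 0 <= \sum_i c1 i * (u *m B^T) 0 i ^+ 2
  by apply: sumr_ge0 => j _; apply: mulr_ge0 => //; exact: sqr_ge0.
have P2 : 0 <= \sum_i c2 i * (u *m C^T) 0 i ^+ 2
  by apply: sumr_ge0 => j _; apply: mulr_ge0 => //; exact: sqr_ge0.
move/eqP; rewrite paddr_eq0 ?addr_ge0 // paddr_eq0 // => /andP[/andP[Hu _] _].
apply/rowP => j; rewrite mxE.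
move: Hu; rewrite psumr_eq0 => [/allP/(_ j)|]; last by move=> k _; exact: sqr_ge0.
rewrite mem_index_enum /= sqrf_eq0 /u mxE; move=> /(_ isT)/eqP ->; by rewrite mxE.
Qed.
Lemma Asub_embed (R : realFieldType) q r (A : 'M[R]_(q, r)) (T : {set 'I_q}) :
  Asub A T = embed_cols R T *m A.
Proof.
apply/matrixP => i k; rewrite !mxE (bigD1 (enum_val i)) //= big1 ?addr0.
  by rewrite mxE eqxx mul1r.
by move=> j /negbTE nj; rewrite mxE eq_sym nj mul0r.
Qed.

Lemma embed_sum (R : realFieldType) q (S : {set 'I_q}) :
  (embed_cols R S)^T *m embed_cols R S + (embed_cols R (~: S))^T *m embed_cols R (~: S)
  = 1%:M.
Proof.
apply/matrixP => j j'; rewrite !mxE.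
have E : forall T : {set 'I_q},
  \sum_(k < #|T|) (embed_cols R T)^T j k * embed_cols R T k j' =
  \sum_(x in T) ((x == j)%:R * (x == j')%:R).
  by move=> T; rewrite [RHS]big_enum_val; apply: eq_bigr => k _; rewrite !mxE.
rewrite !E.
transitivity (\sum_x ((x == j)%:R * (x == j')%:R : R)).
  rewrite [RHS](bigID (mem S)) /=; congr (_ + _).
  by apply: eq_bigl => x; rewrite inE.
rewrite (bigD1 j) //= big1 ?addr0 => [|x /negbTE ->]; last by rewrite mul0r.
by rewrite eqxx mul1r eq_sym.
Qed.

Unset Implicit Arguments.

Theorem mainTheorem3 (R : realFieldType) (V : lmodType R) (cov : V -> V -> R)
  (r q d : nat) (hr : (0 < r)%N) (hq : (0 < q)%N) (hd : (0 < d)%N)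
  (nz : 'I_r -> V) (nw : 'I_q -> V) (nx : 'I_d -> V) (ny : V)
  (sw : 'I_q -> R) (dx : 'I_d -> R) (sy : R)
  (A : 'M[R]_(q, r)) (B : 'M[R]_(d, r)) (beta : 'cV[R]_d) (gamma : 'cV[R]_q)
  (Hcov : covariance_form cov)
  (Hsw : forall j, 0 < sw j) (Hdx : forall i, 0 < dx i)
  (Hzz : forall k l, cov (nz k) (nz l) = (k == l)%:R)
  (Hww : forall j j', cov (nw j) (nw j') = (j == j')%:R * sw j)
  (Hxx : forall i i', cov (nx i) (nx i') = (i == i')%:R * dx i)
  (Hyy : cov ny ny = sy)
  (Hzw : forall k j, cov (nz k) (nw j) = 0)
  (Hzx : forall k i, cov (nz k) (nx i) = 0)
  (Hzy : forall k, cov (nz k) ny = 0)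
  (Hwx : forall j i, cov (nw j) (nx i) = 0)
  (Hwy : forall j, cov (nw j) ny = 0)
  (Hxy : forall i, cov (nx i) ny = 0)
  (S : {set 'I_q}) :
  betahat cov nz nw nx ny A B beta gamma S = beta + Cmat A B dx sw S *m gamma.
Proof.
pose G : 'M[R]_(d + #|S|, r) := col_mx B (Asub A S).
pose nU (k : 'I_(d + #|S|)) := match split k with inl i => nx i | inr j => nw (enum_val j) end.
pose Dm : 'M[R]_(d + #|S|) := block_mx (Dx dx) 0 0 (Dsub sw S).
pose ES := embed_cols R S; pose ET := embed_cols R (~: S).
pose c : 'cV[R]_r := B^T *m beta + A^T *m gamma.
pose nY := \sum_i beta i 0 *: nx i + \sum_j gamma j 0 *: nw j + ny.
have hXWS : forall k, semXWS nz nw nx A B k = \sum_l G k l *: nz l + nU k.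
  move=> k; rewrite /semXWS /nU /G; under eq_bigr do rewrite mxE.
  case: (split k) => [i|j] /=; first by rewrite /semX /semZ.
  by rewrite /semW /semZ; under eq_bigr do rewrite mxE.
have hY : semY nz nw nx ny A B beta gamma = \sum_l c l 0 *: nz l + nY.
  rewrite /semY /semX /semW /semZ /nY /c.
  rewrite (eq_bigr (fun i => \sum_l (beta i 0 * B i l) *: nz l + beta i 0 *: nx i));
    last by move=> i _; rewrite scalerDr scaler_sumr; congr (_ + _);
      apply: eq_bigr => l _; rewrite scalerA.
  rewrite [X in _ + X + _](eq_bigr (fun j => \sum_l (gamma j 0 * A j l) *: nz l + gamma j 0 *: nw j));
    last by move=> j _; rewrite scalerDr scaler_sumr; congr (_ + _);
      apply: eq_bigr => l _; rewrite scalerA.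
  rewrite !big_split /= exchange_big [X in _ + (X + _) + _ = _]exchange_big /=.
  rewrite addrACA -[LHS]addrA; congr (_ + _).
  rewrite [RHS](eq_bigr (fun l => \sum_i (beta i 0 * B i l) *: nz l +
      \sum_i (gamma i 0 * A i l) *: nz l)) ?big_split // => l _.
  by rewrite !mxE scalerDl !scaler_suml; congr (_ + _); apply: eq_bigr => i _;
    rewrite !mxE mulrC.
have hzU : forall l k, cov (nz l) (nU k) = 0.
  by move=> l k; rewrite /nU; case: (split k).
have hzY : forall l, cov (nz l) nY = 0.
  move=> l; rewrite /nY !(covDr Hcov) !(cov_sumr Hcov) Hzy addr0 !big1 ?addr0 //.
    by move=> j _; rewrite (covZr Hcov) Hzw mulr0.
  by move=> i _; rewrite (covZr Hcov) Hzx mulr0.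
have hVar : VarXWS cov nz nw nx A B S = G *m G^T + Dm.
  apply/matrixP => k k'; rewrite [LHS]mxE !hXWS (cov_comb Hcov) //.
  rewrite [RHS]mxE; congr (_ + _).
    by rewrite mxE; apply: eq_bigr => l _; rewrite [G^T _ _]mxE.
  rewrite /nU /Dm [block_mx _ _ _ _ _ _]mxE.
  case: (split k) => [i|j]; rewrite mxE; case: (split k') => [i'|j'];
    rewrite ?mxE ?Hxx ?Hww ?Hwx ?(covC Hcov (nx _)) ?Hwx //.
    by rewrite mulr_natl.
  by rewrite mulr_natl (inj_eq enum_val_inj).
have sel : forall (n : nat) (i : 'I_n) (f : 'I_n -> R),
    \sum_i' f i' * (i == i')%:R = f i.
  move=> n i f; rewrite (bigD1 i) //= big1 ?addr0 ?eqxx ?mulr1 // => i' /negbTE.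
  by rewrite eq_sym => ->; rewrite mulr0.
have hCov : CovXWSY cov nz nw nx ny A B beta gamma S =
    G *m c + Dm *m col_mx beta (ES *m gamma).
  rewrite /Dm mul_block_col !mul0mx addr0 add0r /Dx /Dsub !mul_diag_mx.
  apply/matrixP => k j0; rewrite (ord1 j0) [LHS]mxE hXWS hY (cov_comb Hcov) //.
  rewrite [RHS]mxE; congr (_ + _).
    by rewrite mxE; apply: eq_bigr.
  rewrite /nU /nY mxE; case: (split k) => [i|j]; rewrite !mxE !(covDr Hcov) !(cov_sumr Hcov).
    rewrite Hxy addr0 [X in _ + X]big1 ?addr0 => [|j _]; last first.
      by rewrite (covZr Hcov) (covC Hcov) Hwx mulr0.
    under eq_bigr do rewrite (covZr Hcov) Hxx mulrA mulrC.
    by rewrite -mulr_sumr sel.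
  rewrite Hwy addr0 [X in X + _]big1 ?add0r => [|i _]; last first.
    by rewrite (covZr Hcov) Hwx mulr0.
  under eq_bigr do rewrite (covZr Hcov) Hww mulrA mulrC.
  rewrite -mulr_sumr sel; congr (_ * _).
  by under eq_bigr do rewrite mxE mulrC; rewrite sel.
pose invDx := invmx (Dx dx); pose invDS := invmx (Dsub sw S).
pose Dinv : 'M[R]_(d + #|S|) := block_mx invDx 0 0 invDS.
have dxn0 : forall i, dx i != 0 by move=> i; rewrite gt_eqF.
have swn0 : forall i : 'I_#|S|, sw (enum_val i) != 0 by move=> i; rewrite gt_eqF.
have hDx : invDx = diag_mx (\row_i (dx i)^-1) by rewrite /invDx /Dx invmx_diag.
have hDS : invDS = diag_mx (\row_i (sw (enum_val i))^-1)
  by rewrite /invDS /Dsub (invmx_diag (p := fun i => sw (enum_val i))).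
have hDD : Dm *m Dinv = 1%:M.
  rewrite /Dm /Dinv mulmx_block ?mulmx0 ?mul0mx ?addr0 ?add0r hDx hDS /Dx /Dsub.
  rewrite diag_mulinv // (diag_mulinv (p := fun i => sw (enum_val i))) //.
  by rewrite -scalar_mx_block.
pose Kc := 1%:M + B^T *m invDx *m B + (Asub A S)^T *m invDS *m Asub A S.
have hK : 1%:M + G^T *m Dinv *m G = Kc.
  rewrite /G /Dinv /Kc tr_col_mx mul_row_block ?mulmx0 ?mul0mx addr0 add0r.
  by rewrite mul_row_col addrA.
have Ku : Kc \in unitmx.
  rewrite /Kc hDx hDS; apply: K_unit => i; rewrite invr_ge0 ltW //.
have [Mu HMG] := woodbury hDD (esym hK) Ku.
pose v := col_mx beta (ES *m gamma).
pose w := (Asub A (~: S))^T *m (ET *m gamma).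
have hc : c = G^T *m v + w.
  rewrite /c /v /w /G tr_col_mx mul_row_col !Asub_embed !trmx_mul -addrA.
  congr (_ + _).
  rewrite -[gamma in LHS]mul1mx -(embed_sum R S) mulmxDl mulmxDr.
  by rewrite !mulmxA.
have hcv : G *m c + Dm *m v = (G *m G^T + Dm) *m v + G *m w.
  by rewrite hc mulmxDr mulmxDl mulmxA addrAC.
rewrite /betahat hVar hCov -/v hcv -mulmxA mulmxDr (mulKmx Mu) mulmxA HMG.
rewrite mulmxDr /v mul_row_col mul1mx mul0mx addr0; congr (_ + _).
rewrite /Dinv !mulmxA mul_row_block ?mulmx0 ?mul0mx ?mul1mx ?addr0 ?add0r.
rewrite /G mul_row_col mul0mx addr0.
by [].
Qed.
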